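(* Let $O=(U,\prec)$ be a CvT order on a finite set of operations $U=C\cup T$, $C\cap T=\varnothing$. Suppose that for every Cv-set $C_i$ and all $p,q\in C_i$, the operations $p$ and $q$ commute. Then every LAC system for $O$ is state convergent, i.e. for any two linear extensions $O_i=(U,<_i)$ and $O_j=(U,<_j)$ of $O$ we have $S(O_i)=S(O_j)$.
   Context: Operations are modeled as state transformers: there is a set of states $\Sigma$, an initial state $s_0\in\Sigma$, and each operation $u\in U$ is a function $u:\Sigma\to\Sigma$. For a linear order (sequence) $u_1<u_2<\dots<u_n$ of $U$, its resulting state is $S=u_n(\cdots u_2(u_1(s_0))\cdots)$. Two operations $p,q$ commute if $p\circ q=q\circ p$. A CvT order is a strict partial order $O=(U,\prec)$ on $U=C\cup T$ ($C\cap T=\varnothing$) such that (i) any two distinct $u,v\in T$ are comparable ($u\prec v$ or $v\prec u$), and (ii) every $p\in C$ and $u\in T$ are comparable ($p\prec u$ or $u\prec p$). A Cv-set is a subset $C_i\subseteq C$ such that (a) any two elements of $C_i$ are incomparable under $\prec$, and (b) every $p\in C\setminus C_i$ is comparable to some $q\in C_i$. A replicated system provides local atomic consistency (LAC) if each site applies the operations of $U$ according to some linear extension of the CvT order. An LAC system is state convergent if all linear extensions of the underlying CvT order yield the same resulting state. *)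

(* Defs.v *)
From mathcomp Require Import all_boot.
Set Implicit Arguments. Unset Strict Implicit. Unset Printing Implicit Defensive.

Definition strict_porder (U : finType) (lt : rel U) : Prop :=
  (forall u, ~~ lt u u) /\ (forall u v w, lt u v -> lt v w -> lt u w).

Definition comparable_rel (U : finType) (lt : rel U) (u v : U) : bool :=
  lt u v || lt v u.

Definition CvT_order (U : finType) (C T : {set U}) (lt : rel U) : Prop :=
  [/\ strict_porder lt, [disjoint C & T], C :|: T = [set: U],
      (forall u v, u \in T -> v \in T -> u != v -> comparable_rel lt u v) &
      (forall p u, p \in C -> u \in T -> comparable_rel lt p u)].

Definition Cv_set (U : finType) (C : {set U}) (lt : rel U) (Ci : {set U}) : Prop :=
  [/\ Ci \subset C,
      (forall p q, p \in Ci -> q \in Ci -> ~~ comparable_rel lt p q) &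
      (forall p, p \in C :\: Ci -> exists2 q, q \in Ci & comparable_rel lt p q)].

Definition linear_extension (U : finType) (lt : rel U) (s : seq U) : Prop :=
  uniq s /\ (forall u, u \in s) /\
  (forall u v, lt u v -> index u s < index v s).

Definition result_state (U : finType) (Sigma : Type) (op : U -> Sigma -> Sigma)
  (s0 : Sigma) (s : seq U) : Sigma :=
  foldl (fun st u => op u st) s0 s.

Definition commute_ops (Sigma : Type) (f g : Sigma -> Sigma) : Prop :=
  forall x, f (g x) = g (f x).

(* Main.v *)
Require Import Defs.
From mathcomp Require Import all_boot.
From mathcomp Require Import zify.

Lemma fold_commute (U : eqType) (Sigma : Type) (op : U -> Sigma -> Sigma)
  x (t1 t2 : seq U) st :
  (forall y, y \in t1 -> commute_ops (op x) (op y)) ->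
  foldl (fun st u => op u st) st (t1 ++ x :: t2) =
  foldl (fun st u => op u st) (op x st) (t1 ++ t2).
Proof.
elim: t1 st => [|y t1 IH] st H //=.
rewrite IH; last by move=> z hz; apply: H; rewrite inE hz orbT.
by rewrite (H y (mem_head _ _)).
Qed.

Lemma main_fold (U : eqType) (Sigma : Type) (op : U -> Sigma -> Sigma)
  (lt : rel U) :
  (forall x y, x != y -> ~~ lt x y -> ~~ lt y x -> commute_ops (op x) (op y)) ->
  forall (s t : seq U) st, uniq s -> perm_eq s t ->
  (forall u v, u \in s -> v \in s -> lt u v -> index u s < index v s) ->
  (forall u v, u \in t -> v \in t -> lt u v -> index u t < index v t) ->
  foldl (fun st u => op u st) st s = foldl (fun st u => op u st) st t.
Proof.
move=> Hc; elim=> [|x s IH] t st Us Pst Hs Ht.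
  by move: Pst; rewrite perm_sym => /perm_nilP ->.
have Ut : uniq t by rewrite -(perm_uniq Pst).
have xt : x \in t by rewrite -(perm_mem Pst) mem_head.
case/splitPr: xt Pst Ht Ut => t1 t2 Pst Ht Ut.
move: (Us) => /= /andP [xs Us'].
move: (Ut); rewrite cat_uniq /= => /and3P [U1 _ /andP [xt2 U2]].
have xt1 : x \notin t1.
  apply/negP => h; move: Ut; rewrite cat_uniq => /and3P [_ /hasPn H _].
  by move: (H x (mem_head _ _)); rewrite h.
rewrite /= fold_commute; last first.
  move=> y yt1; have yx : x != y by apply/eqP => e; by rewrite e yt1 in xt1.
  have yin : y \in t1 ++ x :: t2 by rewrite mem_cat yt1.
  have xin : x \in t1 ++ x :: t2 by rewrite mem_cat mem_head orbT.
  have ys : y \in x :: s by rewrite (perm_mem Pst).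
  apply: Hc => //; apply/negP => hl.
    move: (Ht _ _ xin yin hl); rewrite !index_cat yt1 (negbTE xt1) /= eqxx.
    by move: (index_mem y t1); rewrite yt1 addn0 => h1 h2; move: (ltn_trans h1 h2); rewrite ltnn.
  move: (Hs _ _ ys (mem_head _ _) hl); rewrite /= eqxx.
  by case: eqP.
apply: IH => //.
- by rewrite -(perm_cons x); apply: (perm_trans Pst); rewrite -[x :: t2]cat1s perm_catCA.
- move=> u v us vs h; move: (Hs u v); rewrite /= !inE us vs !orbT => /(_ isT isT h).
  have ux : x != u by apply/eqP => e; rewrite e us in xs.
  have vx : x != v by apply/eqP => e; rewrite e vs in xs.
  by rewrite (negbTE ux) (negbTE vx).
- move=> u v ut vt h.
  have ux : u != x by apply/eqP => e; move: ut; rewrite e mem_cat (negbTE xt1) (negbTE xt2).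
  have vx : v != x by apply/eqP => e; move: vt; rewrite e mem_cat (negbTE xt1) (negbTE xt2).
  have ut' : u \in t1 ++ x :: t2 by move: ut; rewrite !mem_cat inE => /orP [->|->]; rewrite ?orbT.
  have vt' : v \in t1 ++ x :: t2 by move: vt; rewrite !mem_cat inE => /orP [->|->]; rewrite ?orbT.
  move: (Ht _ _ ut' vt' h); rewrite !index_cat /= eq_sym (negbTE ux) eq_sym (negbTE vx).
  case: (boolP (u \in t1)) => hu; case: (boolP (v \in t1)) => hv; rewrite ?ltn_add2l ?ltnS //; rewrite -index_mem in hu; rewrite -index_mem in hv.
  - by move=> _; apply: (leq_trans hu); apply: leq_addr.
  - by move=> h2; move: (ltn_trans (leq_ltn_trans (leq_addr _ _) h2) hv); rewrite ltnn.
Qed.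

Theorem theorem1 (U : finType) (Sigma : Type) (op : U -> Sigma -> Sigma)
  (s0 : Sigma) (C T : {set U}) (lt : rel U) :
  CvT_order C T lt ->
  (forall Ci : {set U}, Cv_set C lt Ci ->
     forall p q, p \in Ci -> q \in Ci -> commute_ops (op p) (op q)) ->
  forall si sj : seq U, linear_extension lt si -> linear_extension lt sj ->
  result_state op s0 si = result_state op s0 sj.
Proof.
move=> [[irr trans] _ CT TT CTc] Hcv si sj [Ui [alli Hi]] [Uj [allj Hj]].
have inC : forall x y, x != y -> ~~ lt x y -> ~~ lt y x -> x \in C.
  move=> x y nxy l1 l2; have : x \in C :|: T by rewrite CT inE.
  rewrite inE => /orP [//|xT].
  have : y \in C :|: T by rewrite CT inE.
  rewrite inE => /orP [yC|yT].
    by move: (CTc y x yC xT); rewrite /comparable_rel (negbTE l1) (negbTE l2).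
  by move: (TT x y xT yT nxy); rewrite /comparable_rel (negbTE l1) (negbTE l2).
apply: (@main_fold U Sigma op lt) => //.
- move=> x y nxy l1 l2.
  have xC := inC x y nxy l1 l2.
  have yC : y \in C by apply: (inC y x) => //; rewrite eq_sym.
  pose P := fun A : {set U} =>
    (A \subset C) && [forall a in A, forall b in A, ~~ comparable_rel lt a b].
  have P0 : P [set x; y].
    apply/andP; split.
      by apply/subsetP => z; rewrite !inE => /orP [/eqP ->|/eqP ->].
    apply/forall_inP => a ha; apply/forall_inP => b hb.
    move: ha hb; rewrite !inE /comparable_rel =>
      /orP [/eqP ->|/eqP ->] /orP [/eqP ->|/eqP ->];
      by rewrite ?(negbTE (irr _)) ?(negbTE l1) ?(negbTE l2).
  have [A mA sA] := maxset_exists P0.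
  have PA := maxsetp mA; move/andP: (PA) => [sAC incA].
  apply: (Hcv A); last 2 first.
  + by apply: (subsetP sA); rewrite !inE eqxx.
  + by apply: (subsetP sA); rewrite !inE eqxx orbT.
  split => //.
    by move=> p q hp hq; move/forall_inP: incA => /(_ p hp) /forall_inP /(_ q hq).
  move=> p; rewrite inE => /andP [pA pC].
  case: (boolP [exists q in A, comparable_rel lt p q]).
    by move=> /exists_inP [q qA hq]; exists q.
  move=> /exists_inP hn.
  have PpA : P (p |: A).
    apply/andP; split.
      by apply/subsetP => z; rewrite !inE => /orP [/eqP ->//|zA]; apply: (subsetP sAC).
    apply/forall_inP => a; rewrite !inE => /orP [/eqP ->|aA];
      apply/forall_inP => b; rewrite !inE => /orP [/eqP ->|bA].
    * by rewrite /comparable_rel (negbTE (irr _)).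
    * by apply/negP => h; apply: hn; exists b.
    * apply/negP => h; apply: hn; exists a => //.
      by move: h; rewrite /comparable_rel orbC.
    * by move/forall_inP: incA => /(_ a aA) /forall_inP /(_ b bA).
  have := maxsetsup mA PpA (subsetUr _ _).
  by move=> e; move: pA; rewrite -e !inE eqxx.
- by apply: uniq_perm => // z; rewrite alli allj.
- by move=> u v _ _; apply: Hi.
- by move=> u v _ _; apply: Hj.
Qed.
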